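(* Let $g:\mathbb{F}_{2^n}\to\mathbb{F}_2$ and let $u_1,\ldots,u_\tau$ be pairwise distinct elements of $\mathbb{F}_{2^n}$. The following are equivalent: 1) $D_{u_i}D_{u_j}g(x)=0$ for all $x$ and all $1\le i<j\le\tau$ (i.e. $g$ satisfies property $(\mathbf{P}_\tau)$ with defining set $\{u_1,\ldots,u_\tau\}$); 2) there exist Boolean functions $g_1,\ldots,g_\tau$ on $\mathbb{F}_{2^n}$ such that $g(x+\sum_{i=1}^\tau w_iu_i)=g(x)+\sum_{i=1}^\tau w_ig_i(x)$ for all $x\in\mathbb{F}_{2^n}$ and all $w=(w_1,\ldots,w_\tau)\in\mathbb{F}_2^\tau$. Moreover, if these hold, then the functions $g_i$ in 2) are exactly $g_i=D_{u_i}g$, $i=1,\ldots,\tau$.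
   Context: $D_ag(x)=g(x)+g(x+a)$; $D_aD_bg(x)=g(x)+g(x+a)+g(x+b)+g(x+a+b)$. A Boolean function $g$ satisfies property $(\mathbf{P}_\tau)$ with defining set $\{u_1,\ldots,u_\tau\}$ if $u_1,\ldots,u_\tau$ are pairwise distinct and $D_{u_i}D_{u_j}g=0$ for all $1\le i<j\le\tau$. *)

(* Defs.v *)
From HB Require Import structures.
From mathcomp Require Import all_boot all_order all_algebra all_field.
Set Implicit Arguments. Unset Strict Implicit. Unset Printing Implicit Defensive.
Import GRing.Theory.
Local Open Scope ring_scope.

(* Boolean functions F -> F_2 are modelled as F -> bool, with addition in F_2
   being xor (addb). *)

Definition Dder (F : zmodType) (a : F) (g : F -> bool) : F -> bool :=
  fun x => g x (+) g (x + a).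

Definition prop_P (F : zmodType) (tau : nat) (u : 'I_tau -> F) (g : F -> bool) : Prop :=
  injective u /\
  forall (i j : 'I_tau), (i < j)%N -> forall x, Dder (u i) (Dder (u j) g) x = false.

Definition cond2 (F : zmodType) (tau : nat) (u : 'I_tau -> F) (g : F -> bool)
    (gs : 'I_tau -> F -> bool) : Prop :=
  forall (x : F) (w : 'I_tau -> bool),
    g (x + \sum_(i < tau) (if w i then u i else 0)) =
    g x (+) \big[addb/false]_(i < tau) (w i && gs i x).

(* Main.v *)
Require Import Defs.
From HB Require Import structures.
From mathcomp Require Import all_boot all_order all_algebra all_field.
Import GRing.Theory.
Local Open Scope ring_scope.

Section Aux.
Variables (F : zmodType) (tau : nat) (u : 'I_tau -> F) (g : F -> bool).
Hypothesis H : forall (i j : 'I_tau), (i < j)%N -> forall x, Dder (u i) (Dder (u j) g) x = false.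

Lemma inv_step (i j : 'I_tau) : i != j -> forall y,
  Dder (u i) g (y + u j) = Dder (u i) g y.
Proof.
move=> ne y; rewrite /Dder.
case: (ltngtP i j) => [lt|gt|eq].
- have := H i j lt y; rewrite /Dder (addrAC y (u i) (u j)).
  by case: (g y); case: (g (y + u i)); case: (g (y + u j)); case: (g (y + u j + u i)).
- have := H j i gt y; rewrite /Dder.
  by case: (g y); case: (g (y + u i)); case: (g (y + u j)); case: (g (y + u j + u i)).
- by move: ne; rewrite (ord_inj eq) eqxx.
Qed.

Lemma inv_seq (w : 'I_tau -> bool) (i : 'I_tau) (s : seq 'I_tau) :
  i \notin s -> forall y,
  Dder (u i) g (y + \sum_(j <- s) (if w j then u j else 0)) = Dder (u i) g y.
Proof.
elim: s => [|j s IH] /= Hn y; first by rewrite big_nil addr0.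
rewrite in_cons negb_or in Hn; case/andP: Hn => Hij Hs.
rewrite big_cons; case: (w j).
- by rewrite addrA IH // inv_step.
- by rewrite add0r IH.
Qed.

Lemma main_seq (w : 'I_tau -> bool) (s : seq 'I_tau) : uniq s -> forall x,
  g (x + \sum_(j <- s) (if w j then u j else 0)) =
  g x (+) \big[addb/false]_(j <- s) (w j && Dder (u j) g x).
Proof.
elim: s => [|j s IH] /= Hu x; first by rewrite !big_nil addr0 addbF.
case/andP: Hu => Hj Hs.
rewrite !big_cons; case: (w j) => /=.
- rewrite addrA addrAC.
  have -> : g (x + \sum_(j0 <- s) (if w j0 then u j0 else 0) + u j) =
     g (x + \sum_(j0 <- s) (if w j0 then u j0 else 0)) (+)
     Dder (u j) g (x + \sum_(j0 <- s) (if w j0 then u j0 else 0)).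
    by rewrite /Dder addbA addbb addFb.
  rewrite inv_seq // IH //.
  by case: (g x); case: (Dder (u j) g x); case: (\big[addb/false]_(j0 <- s) _).
- by rewrite add0r IH.
Qed.
End Aux.

Theorem lemma3 (n : nat) (F : finFieldType)
    (hchar : (2%N \in [pchar F])%R) (hcard : #|F| = (2 ^ n)%N)
    (g : F -> bool) (tau : nat) (u : 'I_tau -> F) (hu : injective u) :
  (prop_P u g <-> exists gs : 'I_tau -> F -> bool, cond2 u g gs) /\
  (forall gs : 'I_tau -> F -> bool, cond2 u g gs ->
     forall (i : 'I_tau) (x : F), gs i x = Dder (u i) g x).
Proof.
have gsD : forall gs : 'I_tau -> F -> bool, cond2 u g gs ->
     forall (i : 'I_tau) (x : F), gs i x = Dder (u i) g x.
  move=> gs C i x; have := C x (fun j => j == i).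
  rewrite (bigD1 i) //= big1 ?addr0; last by move=> j /negPf ->.
  rewrite (bigD1 i) //= big1 ?eqxx /=; last by move=> j /negPf ->.
  by rewrite /Dder addbF => ->; rewrite addbA addbb addFb.
split=> //; split.
- case=> _ HP; exists (fun i => Dder (u i) g) => x w.
  apply: main_seq => //; exact: index_enum_uniq.
- case=> gs C; split=> // i j lt x.
  have ne : i != j by rewrite neq_ltn lt.
  have := C x (fun k => (k == i) || (k == j)).
  rewrite (bigD1 i) //= (bigD1 j) /=; last by rewrite eq_sym.
  rewrite big1; last by move=> k /andP[/negPf -> /negPf ->].
  rewrite (bigD1 i) //= (bigD1 j) /=; last by rewrite eq_sym.
  rewrite big1; last by move=> k /andP[/negPf -> /negPf ->].
  rewrite eqxx (negPf (ne : i != j)) eq_sym (negPf ne) eqxx /= addr0 addbF.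
  rewrite !gsD // /Dder addrA => E.
  rewrite E.
  by case: (g x); case: (g (x + u i)); case: (g (x + u j)).
Qed.
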